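(* Consider the Weakener algorithm (described in the context) for $n \ge 3$ processes $p_0,\dots,p_{n-1}$. If the registers $R_1[j]$, $R_2[j]$, $C_1[j]$ ($j \ge 0$) used by the algorithm are linearizable but not strongly linearizable, then a strong adversary can construct a run of the algorithm in which all the processes execute infinitely many rounds, and therefore never reach a return statement.
   Context: Model: an asynchronous shared-memory system of $n\ge 3$ processes $p_0,\dots,p_{n-1}$ that may fail by crashing. A process is correct if it takes infinitely many steps. After returning from the algorithm, a process takes no-op steps forever. A strong adversary is a scheduler that sees the entire history so far, including the results of all coin flips made so far, and chooses adaptively which process takes the next step. A ''linearizable [strongly linearizable] register'' means an implemented register whose implementation is linearizable [strongly linearizable]. Linearizability: every operation appears to take effect instantaneously at some point between its invocation and its response, i.e., each history has a linearization (a sequential history consistent with the real-time order of non-overlapping operations and with the sequential specification). Strong linearizability: a set of histories $\mathcal{H}$ is strongly linearizable if there is a function $f$ from the prefix-closure of $\mathcal{H}$ to sequential histories such that (L) for every $H$ in the prefix-closure, $f(H)$ is a linearization of $H$, and (P) whenever $G$ is a prefix of $H$ (both in the prefix-closure), $f(G)$ is a prefix of $f(H)$. Weakener algorithm. Shared registers, for each $j = 0,1,2,\dots$: $R_1[j]$, a multi-writer multi-reader register initialized to $\bot$; $C_1[j]$, a register written only by $p_0$, initialized to $-1$; $R_2[j]$, a register initialized to $\textsc{false}$. Code of $p_i$ for $i \in \{0,1\}$: for rounds $j=0,1,2,\dots$: (Phase 1) write $i$ into $R_1[j]$; if $i=0$, flip a fair coin (outcome in $\{0,1\}$) and write the outcome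 into $C_1[j]$; (Phase 2) read $R_2[j]$ into local variable $v_1$; if $v_1 = \textsc{false}$, exit the for loop. After the loop: return. Code of $p_i$ for $i \in \{2,\dots,n-1\}$: for rounds $j=0,1,2,\dots$: (Phase 1) read $R_1[j]$ into $u_1$; read $R_1[j]$ into $u_2$; read $C_1[j]$ into $c_1$; if $u_1 \ne c_1$ or $u_2 \ne 1-c_1$, exit the for loop; (Phase 2) write $\textsc{true}$ into $R_2[j]$. After the loop: return. *)

(* Defs.v *)
From Stdlib Require Import List ZArith Arith Lia.
Import ListNotations.

Inductive regkind := KR1 | KC1 | KR2.
Definition reg : Type := (regkind * nat)%type.

Inductive value := VBot | VInt (z : Z) | VBool (b : bool).
Inductive op := ORead | OWrite (v : value).
Inductive resp := RAck | RVal (v : value).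

Inductive event :=
| Inv (p : nat) (r : reg) (o : op)
| Resp (p : nat) (r : reg) (x : resp).

Lemma regkind_eq_dec (a b : regkind) : {a = b} + {a <> b}.
Proof. decide equality. Defined.
Lemma reg_eq_dec (a b : reg) : {a = b} + {a <> b}.
Proof. decide equality; [apply Nat.eq_dec | apply regkind_eq_dec]. Defined.
Lemma value_eq_dec (a b : value) : {a = b} + {a <> b}.
Proof. decide equality; [apply Z.eq_dec | apply Bool.bool_dec]. Defined.

Definition ev_proc (e : event) : nat :=
  match e with Inv p _ _ | Resp p _ _ => p end.
Definition ev_reg (e : event) : reg :=
  match e with Inv _ r _ | Resp _ r _ => r end.

Definition init_val (r : reg) : value :=
  match fst r with
  | KR1 => VBot
  | KC1 => VInt (-1)
  | KR2 => VBool false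
  end.

Fixpoint seq_legal (v : value) (s : list (op * resp)) : Prop :=
  match s with
  | [] => True
  | (ORead, x) :: s' => x = RVal v /\ seq_legal v s'
  | (OWrite w, x) :: s' => x = RAck /\ seq_legal w s'
  end.

(* An operation is identified by the index of its invocation event. *)
Definition inv_at (h : list event) (i : nat) (p : nat) (o : op) : Prop :=
  exists r, nth_error h i = Some (Inv p r o).

Definition resp_of (h : list event) (i k : nat) (x : resp) : Prop :=
  exists p o r, inv_at h i p o /\ i < k /\
    nth_error h k = Some (Resp p r x) /\
    (forall m e, i < m < k -> nth_error h m = Some e -> ev_proc e <> p).

Definition precedes (S : list (nat * (op * resp))) (i1 i2 : nat) : Prop :=
  exists S1 S2, S = S1 ++ S2 /\ In i1 (map fst S1) /\ In i2 (map fst S2).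

(* S is a linearization of h (history of one register with initial value v0):
   a sequential history containing every completed operation with its
   response, and possibly some pending operations with chosen responses,
   respecting real-time order and the sequential specification. *)
Definition linearization (v0 : value) (h : list event)
    (S : list (nat * (op * resp))) : Prop :=
  NoDup (map fst S) /\
  (forall i o x, In (i, (o, x)) S -> exists p, inv_at h i p o) /\
  (forall i k x, resp_of h i k x -> exists o, In (i, (o, x)) S) /\
  (forall i1 k1 x1 i2, resp_of h i1 k1 x1 -> k1 < i2 ->
       In i2 (map fst S) -> precedes S i1 i2) /\
  seq_legal v0 (map snd S).

Definition linearizable (v0 : value) (h : list event) : Prop :=
  exists S, linearization v0 h S.

Definition proj (r : reg) (h : list event) : list event :=
  filter (fun e => if reg_eq_dec (ev_reg e) r then true else false) h.

Definition regs_linearizable (h : list event) : Prop :=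
  forall r : reg, linearizable (init_val r) (proj r h).

Inductive pc :=
| PW_R1 (j : nat)
| PW_Flip (j : nat)
| PW_C1 (j : nat) (c : Z)
| PW_R2 (j : nat)
| PR_1 (j : nat)
| PR_2 (j : nat) (u1 : value)
| PR_C (j : nat) (u1 u2 : value)
| PR_W (j : nat)
| PDone.

Inductive pstate := Ready (c : pc) | Pending (c : pc).

Definition round_of_pc (c : pc) : option nat :=
  match c with
  | PW_R1 j | PW_Flip j | PW_C1 j _ | PW_R2 j
  | PR_1 j | PR_2 j _ | PR_C j _ _ | PR_W j => Some j
  | PDone => None
  end.

Definition round_of (s : pstate) : option nat :=
  match s with Ready c | Pending c => round_of_pc c end.

Definition inv_of (p : nat) (c : pc) : option (reg * op) :=
  match c with
  | PW_R1 j => Some ((KR1, j), OWrite (VInt (Z.of_nat p)))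
  | PW_Flip _ => None
  | PW_C1 j z => Some ((KC1, j), OWrite (VInt z))
  | PW_R2 j => Some ((KR2, j), ORead)
  | PR_1 j => Some ((KR1, j), ORead)
  | PR_2 j _ => Some ((KR1, j), ORead)
  | PR_C j _ _ => Some ((KC1, j), ORead)
  | PR_W j => Some ((KR2, j), OWrite (VBool true))
  | PDone => None
  end.

Definition val_of (x : resp) : value :=
  match x with RVal v => v | RAck => VBot end.

Definition reader_exits (u1 u2 c1 : value) : bool :=
  (if value_eq_dec u1 c1 then false else true) ||
  match c1 with
  | VInt z => if value_eq_dec u2 (VInt (1 - z)) then false else true
  | _ => true
  end.

Definition next (p : nat) (c : pc) (x : resp) : pc :=
  match c with
  | PW_R1 j => if Nat.eqb p 0 then PW_Flip j else PW_R2 j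
  | PW_C1 j _ => PW_R2 j
  | PW_R2 j =>
      match x with RVal (VBool false) => PDone | _ => PW_R1 (S j) end
  | PR_1 j => PR_2 j (val_of x)
  | PR_2 j u1 => PR_C j u1 (val_of x)
  | PR_C j u1 u2 => if reader_exits u1 u2 (val_of x) then PDone else PR_W j
  | PR_W j => PR_1 (S j)
  | PW_Flip _ | PDone => c
  end.

Record config := mkConfig {
  pst : nat -> pstate;
  hist : list event;
  nflips : nat
}.

Definition init_pc (i : nat) : pc := if Nat.leb i 1 then PW_R1 0 else PR_1 0.
Definition init_config : config := mkConfig (fun i => Ready (init_pc i)) [] 0.

Definition upd (f : nat -> pstate) (p : nat) (s : pstate) : nat -> pstate :=
  fun q => if Nat.eqb q p then s else f q.

(* Pending:
   the operation responds with x (the response is chosen by the adversary;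
   legitimacy is enforced by requiring the history to stay linearizable). *)
Definition step (coins : nat -> bool) (cf : config) (ch : nat * resp) : config :=
  let (p, x) := ch in
  match pst cf p with
  | Ready (PW_Flip j) =>
      mkConfig (upd (pst cf) p
                  (Ready (PW_C1 j (if coins (nflips cf) then 1%Z else 0%Z))))
               (hist cf) (S (nflips cf))
  | Ready c =>
      match inv_of p c with
      | Some (r, o) => mkConfig (upd (pst cf) p (Pending c))
                                (hist cf ++ [Inv p r o]) (nflips cf)
      | None => cf
      end
  | Pending c =>
      match inv_of p c with
      | Some (r, o) => mkConfig (upd (pst cf) p (Ready (next p c x)))
                                (hist cf ++ [Resp p r x]) (nflips cf)
      | None => cf
      end
  end.

(* A strong adversary sees the whole run so far (all configurations, hence
   all coin outcomes so far) and picks the next process to step, together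
   with the response value for a pending operation. *)
Definition adversary : Type := list config -> nat * resp.

(* the run so far, most recent configuration first *)
Fixpoint trace (adv : adversary) (coins : nat -> bool) (t : nat) : list config :=
  match t with
  | 0 => [init_config]
  | S t' => let tr := trace adv coins t' in
            step coins (hd init_config tr) (adv tr) :: tr
  end.

Definition cfg_at (adv : adversary) (coins : nat -> bool) (t : nat) : config :=
  hd init_config (trace adv coins t).

(* Main.v *)
Require Import Defs.
From Stdlib Require Import List ZArith Arith Lia Bool.
Import ListNotations.


Inductive item := AEv (e : event) | ALin (p : nat) (r : reg) (o : op) (x : resp).

Definition erase (a : list item) : list event :=
  flat_map (fun it => match it with AEv e => [e] | ALin _ _ _ _ => [] end) a.
Definition markers (a : list item) : list (op * resp) :=
  flat_map (fun it => match it with AEv _ => [] | ALin _ _ o x => [(o,x)] end) a.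
Definition item_proc it := match it with AEv e => ev_proc e | ALin p _ _ _ => p end.
Definition item_reg it := match it with AEv e => ev_reg e | ALin _ r _ _ => r end.

Inductive sst := SIdle | SPU (o : op) | SPL (o : op) (x : resp) | SBad.

Lemma op_eq_dec (a b : op) : {a = b} + {a <> b}.
Proof. decide equality; apply value_eq_dec. Defined.
Lemma resp_eq_dec (a b : resp) : {a = b} + {a <> b}.
Proof. decide equality; apply value_eq_dec. Defined.

Definition strans (p : nat) (s : sst) (it : item) : sst :=
  if Nat.eqb (item_proc it) p then
    match s, it with
    | SIdle, AEv (Inv _ _ o) => SPU o
    | SPU o, ALin _ _ o' x => if op_eq_dec o o' then SPL o x else SBad
    | SPL o x, AEv (Resp _ _ x') => if resp_eq_dec x x' then SIdle else SBad
    | _, _ => SBad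
    end
  else s.

Definition stat_from s p a := fold_left (strans p) a s.
Definition wf a := forall p, stat_from SIdle p a <> SBad.

Lemma stat_from_app s p a b : stat_from s p (a ++ b) = stat_from (stat_from s p a) p b.
Proof. unfold stat_from. apply fold_left_app. Qed.

Lemma stat_bad p a : stat_from SBad p a = SBad.
Proof.
  induction a as [|it a IH]; simpl; auto.
  replace (strans p SBad it) with SBad; auto.
  unfold strans. destruct (item_proc it =? p); auto.
Qed.

Lemma wf_prefix a b : wf (a ++ b) -> wf a.
Proof.
  intros H p Hp. apply (H p). rewrite stat_from_app, Hp. apply stat_bad.
Qed.

Lemma legal_prefix : forall l1 l2 v, seq_legal v (l1 ++ l2) -> seq_legal v l1.
Proof.
  induction l1 as [|[o x] l1 IH]; intros l2 v H; simpl in *; auto.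
  destruct o; destruct H; split; eauto.
Qed.

Definition pend (h : list event) p i o :=
  inv_at h i p o /\ forall m e, i < m -> nth_error h m = Some e -> ev_proc e <> p.

Lemma lin_idx v0 h S i : linearization v0 h S -> In i (map fst S) -> i < length h.
Proof.
  intros (_ & H2 & _) Hi. apply in_map_iff in Hi as [[i' [o x]] [Heq Hin]]; simpl in Heq; subst.
  destruct (H2 _ _ _ Hin) as [p [r Hr]]. apply nth_error_Some. congruence.
Qed.

Lemma inv_at_app h e i p o : inv_at h i p o -> inv_at (h ++ [e]) i p o.
Proof.
  intros [r Hr]. exists r. rewrite nth_error_app1; auto. apply nth_error_Some; congruence.
Qed.

Lemma inv_at_app_inv h e i p o : inv_at (h ++ [e]) i p o -> i < length h -> inv_at h i p o.
Proof. intros [r Hr] Hi. exists r. rewrite nth_error_app1 in Hr; auto. Qed.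

Lemma nth_last (h : list event) e k : nth_error (h ++ [e]) k <> None -> k < length h \/ (k = length h /\ nth_error (h ++ [e]) k = Some e).
Proof.
  intros H. destruct (Nat.lt_ge_cases k (length h)) as [|Hge]; auto.
  destruct (Nat.eq_dec k (length h)) as [->|Hne].
  - right. split; auto. rewrite nth_error_app2 by lia. rewrite Nat.sub_diag. reflexivity.
  - exfalso. apply H. apply nth_error_None. rewrite length_app. simpl. lia.
Qed.

Lemma resp_of_app h e i k x : resp_of (h ++ [e]) i k x -> k < length h -> resp_of h i k x.
Proof.
  intros (p & o & r & Hinv & Hik & Hk & Hm) Hkl.
  exists p, o, r. split; [|split; [|split]].
  - apply inv_at_app_inv with e; auto; lia.
  - auto.
  - rewrite nth_error_app1 in Hk; auto.
  - intros m e' Hm' He'. apply (Hm m e'); auto. rewrite nth_error_app1; auto; lia.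
Qed.

Lemma lin_inv_app v0 h S q r o : linearization v0 h S -> linearization v0 (h ++ [Inv q r o]) S.
Proof.
  intros HL. pose proof HL as (H1 & H2 & H3 & H4 & H5).
  assert (Hk: forall i k x, resp_of (h ++ [Inv q r o]) i k x -> k < length h).
  { intros i k x (p & o' & r' & _ & _ & Hk & _).
    destruct (nth_last h (Inv q r o) k) as [|[-> Hk']]; try congruence. }
  split; [auto|split; [|split; [|split]]]; auto.
  - intros i o' x Hin. destruct (H2 _ _ _ Hin) as [p Hp]. exists p. apply inv_at_app; auto.
  - intros i k x Hr. apply H3 with k. apply resp_of_app with (Inv q r o); eauto.
  - intros i1 k1 x1 i2 Hr Hk1 Hi2. apply H4 with k1 x1; auto. apply resp_of_app with (Inv q r o); eauto.
Qed.

Lemma lin_resp_app v0 h S q r x i o : linearization v0 h S -> pend h q i o -> In (i,(o,x)) S ->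
  linearization v0 (h ++ [Resp q r x]) S.
Proof.
  intros HL [Hinv Hpend] HinS. pose proof HL as (H1 & H2 & H3 & H4 & H5).
  split; [auto|split; [|split; [|split]]]; auto.
  - intros i' o' x' Hin. destruct (H2 _ _ _ Hin) as [p Hp]. exists p. apply inv_at_app; auto.
  - intros i' k x' Hr.
    destruct (Nat.lt_ge_cases k (length h)) as [Hlt|Hge].
    + apply H3 with k. apply resp_of_app with (Resp q r x); auto.
    + destruct Hr as (p & o' & r' & [r'' Hinv'] & Hik & Hk & Hm).
      destruct (nth_last h (Resp q r x) k) as [|[-> Hk']]; try congruence; try lia.
      rewrite Hk' in Hk. inversion Hk; subst p r' x'.
      rewrite nth_error_app1 in Hinv' by lia.
      destruct Hinv as [r0 Hr0].
      assert (Hil : i < length h) by (apply nth_error_Some; congruence).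
      assert (i' = i).
      { destruct (Nat.lt_trichotomy i' i) as [Hlt|[Heq|Hgt]]; auto.
        - exfalso. apply (Hm i (Inv q r0 o)); auto. rewrite nth_error_app1; auto.
        - exfalso. apply (Hpend i' (Inv q r'' o')); auto. }
      subst i'. exists o. auto.
  - intros i1 k1 x1 i2 Hr Hk1 Hi2. apply H4 with k1 x1; auto.
    apply resp_of_app with (Resp q r x); auto. pose proof (lin_idx _ _ _ _ HL Hi2). lia.
Qed.

Lemma lin_add v0 h S i q o x : linearization v0 h S -> inv_at h i q o -> ~ In i (map fst S) ->
  seq_legal v0 (map snd S ++ [(o,x)]) -> linearization v0 h (S ++ [(i,(o,x))]).
Proof.
  intros (H1 & H2 & H3 & H4 & H5) Hinv Hni Hleg.
  split; [|split; [|split; [|split]]].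
  - rewrite map_app. apply NoDup_app; auto. repeat constructor; auto.
    intros a Ha [<-|[]]. auto.
  - intros i' o' x' Hin. apply in_app_or in Hin as [Hin|[Heq|[]]].
    + eauto.
    + inversion Heq; subst. eauto.
  - intros i' k x' Hr. destruct (H3 _ _ _ Hr) as [o' Ho']. exists o'. apply in_or_app; auto.
  - intros i1 k1 x1 i2 Hr Hk1 Hi2. rewrite map_app in Hi2. apply in_app_or in Hi2 as [Hi2|[Heq|[]]].
    + destruct (H4 _ _ _ _ Hr Hk1 Hi2) as (S1 & S2 & -> & HA & HB).
      exists S1, (S2 ++ [(i,(o,x))]). rewrite app_assoc. split; auto. split; auto.
      rewrite map_app. apply in_or_app; auto.
    + simpl in Heq; subst i2. destruct (H3 _ _ _ Hr) as [o' Ho'].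
      exists S, [(i,(o,x))]. split; auto. split.
      * apply in_map_iff. exists (i1,(o',x1)). auto.
      * simpl. auto.
  - rewrite map_app. auto.
Qed.

Lemma erase_app a b : erase (a ++ b) = erase a ++ erase b.
Proof. unfold erase. apply flat_map_app. Qed.
Lemma markers_app a b : markers (a ++ b) = markers a ++ markers b.
Proof. unfold markers. apply flat_map_app. Qed.

Lemma erase_ev e : erase [AEv e] = [e].
Proof. reflexivity. Qed.
Lemma erase_lin p r o x : erase [ALin p r o x] = [].
Proof. reflexivity. Qed.

Lemma pend_app_other h e p i o : pend h p i o -> ev_proc e <> p -> pend (h ++ [e]) p i o.
Proof.
  intros [Hi Hm] He. split. apply inv_at_app; auto.
  intros m e' Hlt He'. destruct (nth_last h e m) as [Hl|[-> Hk]]; try congruence.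
  rewrite nth_error_app1 in He' by auto. eauto.
Qed.

Lemma lin_main v0 : forall a, wf a -> seq_legal v0 (markers a) ->
  exists S, linearization v0 (erase a) S /\ map snd S = markers a /\
   forall p, (forall o, stat_from SIdle p a = SPU o -> exists i, pend (erase a) p i o /\ ~ In i (map fst S)) /\
             (forall o x, stat_from SIdle p a = SPL o x -> exists i, pend (erase a) p i o /\ In (i,(o,x)) S).
Proof.
  induction a as [|it a IH] using rev_ind; intros Hwf Hleg.
  - exists []. split; [|split; auto].
    + split; [constructor|split; [|split; [|split]]]; simpl; auto.
      * intros i o x [].
      * intros i k x (p & o & r & _ & _ & Hk & _). destruct k; discriminate.
      * intros i1 k1 x1 i2 _ _ [].
    + intros p; split; intros; unfold stat_from in *; simpl in *; discriminate.
  - assert (Hwf' : wf a) by (eapply wf_prefix; eauto).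
    rewrite markers_app in Hleg.
    assert (Hleg' : seq_legal v0 (markers a)) by (eapply legal_prefix; eauto).
    destruct (IH Hwf' Hleg') as (S & HL & Hsnd & Hst).
    assert (Hstp : forall p, stat_from SIdle p (a ++ [it]) = strans p (stat_from SIdle p a) it)
      by (intros; rewrite stat_from_app; reflexivity).
    destruct it as [e | q r o x].
    + rewrite erase_app, ?erase_ev, ?erase_lin.
      destruct e as [q r o | q r x].
      * exists S. split; [apply lin_inv_app; auto|split].
        { rewrite markers_app, Hsnd. simpl. rewrite app_nil_r. auto. }
        intros p. rewrite Hstp. unfold strans. simpl item_proc.
        destruct (Nat.eqb_spec q p) as [<-|Hne].
        -- specialize (Hwf q). rewrite Hstp in Hwf. unfold strans in Hwf. simpl in Hwf.
           rewrite Nat.eqb_refl in Hwf.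
           destruct (stat_from SIdle q a) eqn:E; try (exfalso; apply Hwf; reflexivity).
           split; intros o1 Ho1; try discriminate.
           inversion Ho1; subst o1. exists (length (erase a)). split.
           ++ split. exists r. rewrite nth_error_app2, Nat.sub_diag by lia. reflexivity.
              intros m e Hm He. exfalso. assert (Hs : m < length (erase a ++ [Inv q r o]))
                by (apply nth_error_Some; rewrite He; discriminate).
              rewrite length_app in Hs. simpl in Hs. lia.
           ++ intros Hin. pose proof (lin_idx _ _ _ _ HL Hin). lia.
        -- destruct (Hst p) as [HA HB]. split.
           ++ intros o' H. destruct (HA o' H) as (i & Hp & Hn). exists i. split; auto. apply pend_app_other; auto.
           ++ intros o' x' H. destruct (HB o' x' H) as (i & Hp & Hn). exists i. split; auto. apply pend_app_other; auto.
      * specialize (Hwf q) as Hwq. rewrite Hstp in Hwq. unfold strans in Hwq. simpl in Hwq.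
        rewrite Nat.eqb_refl in Hwq.
        destruct (stat_from SIdle q a) eqn:E; try (exfalso; apply Hwq; reflexivity).
        destruct (resp_eq_dec x0 x); [subst x0|exfalso; apply Hwq; reflexivity].
        destruct (proj2 (Hst q) o x E) as (i & Hp & Hin).
        exists S. split; [eapply lin_resp_app; eauto|split].
        { rewrite markers_app, Hsnd. simpl. rewrite app_nil_r. auto. }
        intros p. rewrite Hstp. unfold strans. simpl item_proc.
        destruct (Nat.eqb_spec q p) as [<-|Hne].
        -- rewrite E. destruct (resp_eq_dec x x); [|congruence]. split; intros; discriminate.
        -- destruct (Hst p) as [HA HB]. split.
           ++ intros o' H. destruct (HA o' H) as (i' & Hp' & Hn). exists i'. split; auto. apply pend_app_other; auto.
           ++ intros o' x' H. destruct (HB o' x' H) as (i' & Hp' & Hn). exists i'. split; auto. apply pend_app_other; auto.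
    + rewrite erase_app, ?erase_ev, ?erase_lin. rewrite app_nil_r.
      specialize (Hwf q) as Hwq. rewrite Hstp in Hwq. unfold strans in Hwq. simpl in Hwq.
      rewrite Nat.eqb_refl in Hwq.
      destruct (stat_from SIdle q a) eqn:E; try (exfalso; apply Hwq; reflexivity).
      destruct (op_eq_dec o0 o); [subst o0|exfalso; apply Hwq; reflexivity].
      destruct (proj1 (Hst q) o E) as (i & Hp & Hnin).
      exists (S ++ [(i,(o,x))]). split; [|split].
      * apply lin_add with q; auto. apply Hp. rewrite Hsnd. auto.
      * rewrite map_app, markers_app, Hsnd. reflexivity.
      * intros p. rewrite Hstp. unfold strans. simpl item_proc.
        destruct (Nat.eqb_spec q p) as [<-|Hne].
        -- rewrite E. destruct (op_eq_dec o o); [|congruence]. split; intros; try discriminate.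
           inversion H; subst. exists i. split; auto. apply in_or_app; simpl; auto.
        -- destruct (Hst p) as [HA HB]. split.
           ++ intros o' H. destruct (HA o' H) as (i' & Hp' & Hn). exists i'. split; auto.
              rewrite map_app. intros Hin. apply in_app_or in Hin as [Hin|[Heq|[]]]; auto.
              simpl in Heq. subst i'. destruct Hp as [[r1 E1] _]. destruct Hp' as [[r2 E2] _].
              rewrite E1 in E2. inversion E2. congruence.
           ++ intros o' x' H. destruct (HB o' x' H) as (i' & Hp' & Hn). exists i'. split; auto.
              apply in_or_app; auto.
Qed.

Lemma lin_of_wf v0 a : wf a -> seq_legal v0 (markers a) -> linearizable v0 (erase a).
Proof. intros H1 H2. destruct (lin_main v0 a H1 H2) as (S & HL & _). exists S. auto. Qed.


Definition cz (b : bool) : Z := if b then 1%Z else 0%Z.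
Definition readers n := seq 2 (n - 2).

Definition lstate (p j : nat) (b : bool) (s : nat) : pstate :=
  match p with
  | 0 => match s with
         | 0 => Ready (PW_R1 j) | 1 => Pending (PW_R1 j) | 2 => Ready (PW_Flip j)
         | 3 => Ready (PW_C1 j (cz b)) | 4 => Pending (PW_C1 j (cz b))
         | 5 => Ready (PW_R2 j) | 6 => Pending (PW_R2 j) | _ => Ready (PW_R1 (S j)) end
  | 1 => match s with 0 => Ready (PW_R1 j) | 1 => Pending (PW_R1 j) | 2 => Ready (PW_R2 j)
         | 3 => Pending (PW_R2 j) | _ => Ready (PW_R1 (S j)) end
  | _ => match s with 0 => Ready (PR_1 j) | 1 => Pending (PR_1 j)
         | 2 => Ready (PR_2 j (VInt (cz b))) | 3 => Pending (PR_2 j (VInt (cz b)))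
         | 4 => Ready (PR_C j (VInt (cz b)) (VInt (1 - cz b)))
         | 5 => Pending (PR_C j (VInt (cz b)) (VInt (1 - cz b)))
         | 6 => Ready (PR_W j) | 7 => Pending (PR_W j) | _ => Ready (PR_1 (S j)) end
  end.

Definition getc (cf : config) : Z :=
  match pst cf 0 with Pending (PW_C1 _ z) => z | Ready (PW_C1 _ z) => z | _ => 0%Z end.
Definition resp_for (cf : config) (p : nat) : resp :=
  match pst cf p with
  | Pending (PR_1 _) => RVal (VInt (getc cf))
  | Pending (PR_2 _ (VInt z)) => RVal (VInt (1 - z))
  | Pending (PR_C _ u _) => RVal u
  | Pending (PW_R2 _) => RVal (VBool true)
  | _ => RAck end.

Definition lin1 n j b : list item :=
  let rd := map (fun r => ALin r (KR1,j) ORead (RVal (VInt (cz b)))) (readers n) in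
  let w0 := ALin 0 (KR1,j) (OWrite (VInt (Z.of_nat 0))) RAck in
  let w1 := ALin 1 (KR1,j) (OWrite (VInt (Z.of_nat 1))) RAck in
  if b then w1 :: rd ++ [w0] else w0 :: rd ++ [w1].

Definition ann0 n j b s : list item :=
  match s with
  | 0 => [AEv (Inv 0 (KR1,j) (OWrite (VInt (Z.of_nat 0))))]
  | 1 => lin1 n j b ++ [AEv (Resp 0 (KR1,j) RAck)]
  | 3 => [AEv (Inv 0 (KC1,j) (OWrite (VInt (cz b)))); ALin 0 (KC1,j) (OWrite (VInt (cz b))) RAck]
  | 4 => [AEv (Resp 0 (KC1,j) RAck)]
  | 5 => [AEv (Inv 0 (KR2,j) ORead); ALin 0 (KR2,j) ORead (RVal (VBool true))]
  | 6 => [AEv (Resp 0 (KR2,j) (RVal (VBool true)))]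
  | _ => [] end.
Definition ann1 j (s : nat) : list item :=
  match s with
  | 0 => [AEv (Inv 1 (KR1,j) (OWrite (VInt (Z.of_nat 1))))]
  | 1 => [AEv (Resp 1 (KR1,j) RAck)]
  | 2 => [AEv (Inv 1 (KR2,j) ORead); ALin 1 (KR2,j) ORead (RVal (VBool true))]
  | 3 => [AEv (Resp 1 (KR2,j) (RVal (VBool true)))]
  | _ => [] end.
Definition annR r j b s : list item :=
  match s with
  | 0 => [AEv (Inv r (KR1,j) ORead)]
  | 1 => [AEv (Resp r (KR1,j) (RVal (VInt (cz b))))]
  | 2 => [AEv (Inv r (KR1,j) ORead); ALin r (KR1,j) ORead (RVal (VInt (1 - cz b)))]
  | 3 => [AEv (Resp r (KR1,j) (RVal (VInt (1 - cz b))))]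
  | 4 => [AEv (Inv r (KC1,j) ORead); ALin r (KC1,j) ORead (RVal (VInt (cz b)))]
  | 5 => [AEv (Resp r (KC1,j) (RVal (VInt (cz b))))]
  | 6 => [AEv (Inv r (KR2,j) (OWrite (VBool true))); ALin r (KR2,j) (OWrite (VBool true)) RAck]
  | 7 => [AEv (Resp r (KR2,j) RAck)]
  | _ => [] end.
Definition ann n p j b s : list item :=
  match p with 0 => ann0 n j b s | 1 => ann1 j s | _ => annR p j b s end.

Lemma erase_lin1 n j b : erase (lin1 n j b) = [].
Proof.
  unfold lin1. destruct b; simpl; rewrite erase_app; simpl;
  (replace (erase (map _ (readers n))) with (@nil event) by (induction (readers n); simpl; auto)); reflexivity.
Qed.

Definition lenp p := match p with 0 => 7 | 1 => 4 | _ => 8 end.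

Lemma local_step n coins cf p j b s :
  pst cf p = lstate p j b s -> s < lenp p ->
  (2 <= p -> s = 1 -> pst cf 0 = lstate 0 j b 4) ->
  (p = 0 -> s = 2 -> nflips cf = j /\ coins j = b) ->
  step coins cf (p, resp_for cf p) =
    mkConfig (upd (pst cf) p (lstate p j b (S s))) (hist cf ++ erase (ann n p j b s))
             (if (p =? 0) && (s =? 2) then S (nflips cf) else nflips cf).
Proof.
  intros Hst Hs H0 Hf. unfold step, resp_for.
  destruct p as [|[|p']]; simpl in Hs.
  - destruct s as [|[|[|[|[|[|[|s]]]]]]]; [..|lia]; rewrite Hst; simpl;
    try (destruct (Hf eq_refl eq_refl) as [-> ->]);
    try (rewrite erase_app, erase_lin1); simpl; try rewrite app_nil_r; try reflexivity.
  - destruct s as [|[|[|[|s]]]]; [..|lia]; rewrite Hst; simpl; reflexivity.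
  - destruct s as [|[|[|[|[|[|[|[|s]]]]]]]]; [..|lia]; rewrite Hst; simpl; try reflexivity.
    all: try (unfold getc; rewrite H0 by (lia || reflexivity); simpl; reflexivity).
    all: destruct b; reflexivity.
Qed.


Definition blocks n := flat_map (fun r => repeat r 7) (readers n).
Definition P2 n := [0;1] ++ readers n ++ [0;0;1;0].
Definition tl5 := [0;0;0;1;1].
Definition rs n : list nat := P2 n ++ blocks n ++ tl5.
Definition LL n := length (rs n).
Definition sched n t := nth (t mod LL n) (rs n) 0.
Definition adv n : adversary :=
  fun tr => let p := sched n (length tr - 1) in (p, resp_for (hd init_config tr) p).

Notation cnt l x := (count_occ Nat.eq_dec l x).

Fixpoint annotate n j b (pre l : list nat) : list item :=
  match l with
  | [] => []
  | p :: l' => ann n p j b (cnt pre p) ++ annotate n j b (pre ++ [p]) l'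
  end.
Definition AR n j b := annotate n j b [] (rs n).
Fixpoint Hann n (coins : nat -> bool) j :=
  match j with 0 => [] | S j' => Hann n coins j' ++ AR n j' (coins j') end.

Definition Exp n coins j k cf :=
  (forall i, i < n -> pst cf i = lstate i j (coins j) (cnt (firstn k (rs n)) i)) /\
  hist cf = erase (Hann n coins j ++ annotate n j (coins j) [] (firstn k (rs n))) /\
  nflips cf = j + (if 3 <=? cnt (firstn k (rs n)) 0 then 1 else 0).

Lemma firstn_S_nth (l : list nat) k : k < length l -> firstn (S k) l = firstn k l ++ [nth k l 0].
Proof.
  revert k; induction l as [|a l IH]; intros k Hk; simpl in *; [lia|].
  destruct k; simpl; auto. rewrite IH by lia. reflexivity.
Qed.

Lemma cnt_firstn_S (l : list nat) k x : k < length l ->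
  cnt (firstn (S k) l) x = cnt (firstn k l) x + (if Nat.eq_dec (nth k l 0) x then 1 else 0).
Proof.
  intros Hk. rewrite firstn_S_nth by auto. rewrite count_occ_app. simpl.
  destruct (Nat.eq_dec (nth k l 0) x); lia.
Qed.

Lemma cnt_firstn_le (l : list nat) k x : cnt (firstn k l) x <= cnt l x.
Proof.
  rewrite <- (firstn_skipn k l) at 2. rewrite count_occ_app. lia.
Qed.

Lemma annotate_app n j b l1 : forall pre l2,
  annotate n j b pre (l1 ++ l2) = annotate n j b pre l1 ++ annotate n j b (pre ++ l1) l2.
Proof.
  induction l1 as [|a l1 IH]; intros pre l2; simpl.
  - rewrite app_nil_r. auto.
  - rewrite IH, <- app_assoc, <- app_assoc. reflexivity.
Qed.

Lemma annotate_snoc n j b pre l p :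
  annotate n j b pre (l ++ [p]) = annotate n j b pre l ++ ann n p j b (cnt (pre ++ l) p).
Proof. rewrite annotate_app. simpl. rewrite app_nil_r. auto. Qed.

Lemma readers_spec n r : In r (readers n) <-> 2 <= r < n.
Proof. unfold readers. rewrite in_seq. lia. Qed.

Lemma cnt_readers n r : cnt (readers n) r = if (2 <=? r) && (r <? n) then 1 else 0.
Proof.
  destruct ((2 <=? r) && (r <? n)) eqn:E.
  - apply NoDup_count_occ'. apply seq_NoDup. apply readers_spec.
    apply andb_true_iff in E as [E1 E2]. apply Nat.leb_le in E1. apply Nat.ltb_lt in E2. lia.
  - apply count_occ_not_In. rewrite readers_spec. intros [H1 H2].
    apply andb_false_iff in E as [E|E]; [apply Nat.leb_gt in E|apply Nat.ltb_ge in E]; lia.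
Qed.

Lemma cnt_blocks_gen l r : cnt (flat_map (fun r => repeat r 7) l) r = 7 * cnt l r.
Proof.
  assert (Hr : forall a k, cnt (repeat a k) r = if Nat.eq_dec a r then k else 0).
  { intros a k; induction k; simpl; destruct (Nat.eq_dec a r); simpl; auto. }
  induction l as [|a l IH]; [reflexivity|]. cbn [flat_map]. rewrite count_occ_app, IH, Hr.
  simpl. destruct (Nat.eq_dec a r); lia.
Qed.

Lemma cnt_rs n r : cnt (rs n) r =
  match r with 0 => 7 | 1 => 4 | _ => if r <? n then 8 else 0 end.
Proof.
  unfold rs, P2, blocks, tl5. rewrite !count_occ_app, cnt_blocks_gen, cnt_readers.
  destruct r as [|[|r]]; simpl; auto.
  destruct (S (S r) <? n); simpl; lia.
Qed.

Lemma rs_bound n i : 3 <= n -> nth i (rs n) 0 < n.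
Proof.
  intros Hn. destruct (nth_in_or_default i (rs n) 0) as [H| ->]; [|lia].
  revert H. generalize (nth i (rs n) 0). intros x H.
  unfold rs, P2, blocks, tl5 in H. repeat (apply in_app_or in H as [H|H]); simpl in H;
  try (intuition lia).
  - apply readers_spec in H. lia.
  - apply in_flat_map in H as [y [Hy Hx]]. assert (x = y) by (simpl in Hx; intuition). subst. apply readers_spec in Hy. lia.
Qed.

Lemma length_rs n : LL n = length (P2 n) + length (blocks n) + 5.
Proof. unfold LL, rs. rewrite !length_app. simpl. lia. Qed.

Lemma side n k : k < LL n -> 2 <= nth k (rs n) 0 -> cnt (firstn k (rs n)) (nth k (rs n) 0) = 1 ->
  cnt (firstn k (rs n)) 0 = 4.
Proof.
  intros Hk H2 H1. rewrite length_rs in Hk.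
  destruct (Nat.lt_ge_cases k (length (P2 n))) as [Ha|Ha].
  - exfalso. unfold rs in *. rewrite firstn_app, app_nth1 in * by auto.
    replace (k - length (P2 n)) with 0 in * by lia. rewrite firstn_O, app_nil_r in H1.
    pose proof (cnt_firstn_S (P2 n) k (nth k (P2 n) 0) Ha) as E.
    pose proof (cnt_firstn_le (P2 n) (S k) (nth k (P2 n) 0)) as E2.
    destruct (Nat.eq_dec (nth k (P2 n) 0) (nth k (P2 n) 0)) as [_|C]; [|congruence].
    assert (cnt (P2 n) (nth k (P2 n) 0) <= 1).
    { revert H2. generalize (nth k (P2 n) 0). intros r Hr.
      unfold P2. rewrite !count_occ_app, cnt_readers. destruct r as [|[|r']]; [lia|lia|]. simpl.
      repeat match goal with |- context [if ?c then _ else _] => destruct c end; lia. }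
    lia.
  - destruct (Nat.lt_ge_cases k (length (P2 n) + length (blocks n))) as [Hb|Hb].
    + unfold rs. rewrite firstn_app. rewrite firstn_all2 by lia. rewrite count_occ_app.
      rewrite firstn_app. rewrite count_occ_app.
      replace (k - length (P2 n) - length (blocks n)) with 0 by lia. rewrite firstn_O. change (cnt (@nil nat) 0) with 0.
      assert (cnt (P2 n) 0 = 4).
      { unfold P2. rewrite !count_occ_app, cnt_readers. reflexivity. }
      pose proof (cnt_firstn_le (blocks n) (k - length (P2 n)) 0).
      assert (cnt (blocks n) 0 = 0) by (unfold blocks; rewrite cnt_blocks_gen, cnt_readers; reflexivity).
      lia.
    + exfalso. unfold rs in H2. rewrite app_nth2 in H2 by lia. rewrite app_nth2 in H2 by lia.
      unfold tl5 in H2. remember (k - length (P2 n) - length (blocks n)) as i.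
      destruct i as [|[|[|[|[|i]]]]]; simpl in H2; try lia.
Qed.


Lemma Exp_step n coins j k cf : 3 <= n -> k < LL n -> Exp n coins j k cf ->
  Exp n coins j (S k) (step coins cf (nth k (rs n) 0, resp_for cf (nth k (rs n) 0))).
Proof.
  intros Hn Hk (Hp & Hh & Hf).
  assert (Hkl : k < length (rs n)) by exact Hk.
  pose proof (rs_bound n k Hn) as Hpn.
  set (p := nth k (rs n) 0) in *.
  set (s := cnt (firstn k (rs n)) p).
  assert (HS : cnt (firstn (S k) (rs n)) p = S s).
  { rewrite cnt_firstn_S by auto. fold p. destruct (Nat.eq_dec p p); [|congruence]. unfold s. lia. }
  assert (Hs : s < lenp p).
  { pose proof (cnt_firstn_le (rs n) (S k) p) as E. rewrite HS, cnt_rs in E.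
    destruct p as [|[|p']]; simpl in *; try lia.
    destruct (S (S p') <? n) eqn:E'; [lia|]. apply Nat.ltb_ge in E'. lia. }
  rewrite (local_step n coins cf p j (coins j) s).
  2: { apply Hp; auto. }
  2: { auto. }
  2: { intros H2 H1. rewrite Hp by lia. f_equal. apply side; auto. }
  2: { intros H0 H2. split; auto. rewrite Hf. subst p. unfold s in H2. rewrite H0 in H2. rewrite H2. simpl. lia. }
  unfold Exp; cbn [pst hist nflips]. split; [|split].
  - intros i Hi. unfold upd. rewrite cnt_firstn_S by auto. fold p.
    destruct (Nat.eqb_spec i p) as [->|Hne].
    + destruct (Nat.eq_dec p p); [|congruence]. f_equal. unfold s. lia.
    + destruct (Nat.eq_dec p i); [congruence|]. rewrite Nat.add_0_r. auto.
  - rewrite Hh, firstn_S_nth by auto. fold p. rewrite annotate_snoc. simpl app at 3.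
    rewrite app_assoc, !erase_app. reflexivity.
  - rewrite Hf. rewrite cnt_firstn_S by auto. fold p.
    destruct (Nat.eqb_spec p 0) as [E0|E0].
    + rewrite E0. destruct (Nat.eq_dec 0 0) as [_|C]; [|congruence].
      unfold s. rewrite E0. generalize (cnt (firstn k (rs n)) 0). intros c.
      destruct (Nat.eqb_spec c 2) as [->|E2]; [simpl; lia|].
      cbn [andb Nat.eqb]. destruct (Nat.leb_spec 3 c); destruct (Nat.leb_spec 3 (c+1)); lia.
    + cbn [andb]. destruct (Nat.eq_dec p 0); [congruence|]. rewrite Nat.add_0_r. reflexivity.
Qed.

Lemma len_trace adv coins t : length (trace adv coins t) = S t.
Proof. induction t; simpl; auto. Qed.

Lemma cfg_S adv coins t : cfg_at adv coins (S t) = step coins (cfg_at adv coins t) (adv (trace adv coins t)).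
Proof. reflexivity. Qed.

Lemma adv_trace n coins t : adv n (trace (adv n) coins t) =
  (sched n t, resp_for (cfg_at (adv n) coins t) (sched n t)).
Proof. unfold adv. rewrite len_trace. simpl. rewrite Nat.sub_0_r. reflexivity. Qed.

Lemma LL_pos n : 0 < LL n.
Proof. rewrite length_rs. lia. Qed.

Lemma sched_at n j k : k < LL n -> sched n (j * LL n + k) = nth k (rs n) 0.
Proof.
  intros Hk. unfold sched. rewrite (Nat.add_comm (j * LL n) k), Nat.Div0.mod_add, Nat.mod_small by auto.
  reflexivity.
Qed.

Lemma Exp_round n coins j cf : 3 <= n -> Exp n coins j (LL n) cf -> Exp n coins (S j) 0 cf.
Proof.
  intros Hn (Hp & Hh & Hf). unfold LL in *. rewrite firstn_all in *.
  split; [|split].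
  - intros i Hi. rewrite Hp by auto. rewrite cnt_rs.
    destruct i as [|[|i']]; try reflexivity.
    destruct (S (S i') <? n) eqn:E; [reflexivity|]. apply Nat.ltb_ge in E. lia.
  - rewrite Hh. simpl. rewrite app_nil_r. reflexivity.
  - rewrite Hf, cnt_rs. simpl. lia.
Qed.

Lemma Exp_all n coins : 3 <= n -> forall j k, k <= LL n ->
  Exp n coins j k (cfg_at (adv n) coins (j * LL n + k)).
Proof.
  intros Hn j. induction j as [|j IHj]; intros k; induction k as [|k IHk]; intros Hk.
  - split; [|split].
    + intros i Hi. destruct i as [|[|i]]; reflexivity.
    + reflexivity.
    + reflexivity.
  - rewrite Nat.add_succ_r, cfg_S, adv_trace, sched_at by lia. apply Exp_step; [auto|lia|apply IHk; lia].
  - rewrite Nat.add_0_r. replace (S j * LL n) with (j * LL n + LL n) by lia.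
    apply Exp_round; auto.
  - rewrite Nat.add_succ_r, cfg_S, adv_trace, sched_at by lia. apply Exp_step; [auto|lia|apply IHk; lia].
Qed.


Definition projK K (a : list item) :=
  filter (fun it => if regkind_eq_dec (fst (item_reg it)) K then true else false) a.

Lemma projK_flat_map K (f : nat -> list item) l : projK K (flat_map f l) = flat_map (fun x => projK K (f x)) l.
Proof. induction l; simpl; auto. unfold projK in *. rewrite filter_app, IHl. auto. Qed.

Lemma map_as_flat (g : nat -> item) l : map g l = flat_map (fun x => [g x]) l.
Proof. induction l; simpl; congruence. Qed.

Lemma markers_flat (f : nat -> list item) l : markers (flat_map f l) = flat_map (fun x => markers (f x)) l.
Proof. induction l; simpl; auto. rewrite markers_app, IHl. auto. Qed.

Lemma stat_noproc s p l : (forall it, In it l -> item_proc it <> p) -> stat_from s p l = s.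
Proof.
  revert s; induction l as [|it l IH]; intros s H; simpl; auto.
  unfold stat_from in *. simpl. unfold strans at 2.
  destruct (Nat.eqb_spec (item_proc it) p). exfalso; apply (H it); simpl; auto.
  apply IH. intros; apply H; simpl; auto.
Qed.

Lemma stat_from_flat s p (f : nat -> list item) l : NoDup l ->
  (forall r it, In r l -> In it (f r) -> item_proc it = r) ->
  stat_from s p (flat_map f l) = if in_dec Nat.eq_dec p l then stat_from s p (f p) else s.
Proof.
  revert s; induction l as [|a l IH]; intros s Hnd Hf; simpl; auto.
  inversion Hnd; subst. rewrite stat_from_app.
  destruct (Nat.eq_dec a p) as [<-|Hne].
  - rewrite (stat_noproc _ a (flat_map f l)).
    + destruct (in_dec Nat.eq_dec a (a :: l)) as [_|C]; [auto|exfalso; apply C; simpl; auto].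
    + intros it Hit. apply in_flat_map in Hit as [r [Hr Hit]]. rewrite (Hf r it); simpl; auto.
      intros ->. auto.
  - rewrite (stat_noproc _ p (f a)).
    + rewrite IH; auto. 2: { intros; apply Hf; simpl; auto. }
      destruct (in_dec Nat.eq_dec p l) as [i1|n1]; destruct (in_dec Nat.eq_dec p (a :: l)) as [i2|n2]; auto.
      all: try (exfalso; apply n2; simpl; auto; fail).
      all: try (destruct i2 as [E|E]; [congruence|contradiction]).
    + intros it Hit. rewrite (Hf a it); simpl; auto.
Qed.

Lemma annR_proc r j b s it : In it (annR r j b s) -> item_proc it = r.
Proof.
  destruct s as [|[|[|[|[|[|[|[|s]]]]]]]]; simpl; intuition subst; reflexivity.
Qed.

Lemma projK_proc K l r : (forall it, In it l -> item_proc it = r) -> forall it, In it (projK K l) -> item_proc it = r.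
Proof. intros H it Hit. unfold projK in Hit. apply filter_In in Hit. apply H, Hit. Qed.

Lemma ann_R n r j b s : 2 <= r -> ann n r j b s = annR r j b s.
Proof. intros H. destruct r as [|[|r']]; [lia|lia|reflexivity]. Qed.

Lemma annotate_fresh n j b l : NoDup l -> forall pre, (forall x, In x l -> cnt pre x = 0 /\ 2 <= x) ->
  annotate n j b pre l = flat_map (fun r => annR r j b 0) l.
Proof.
  induction l as [|a l IH]; intros Hnd pre H; [reflexivity|]. cbn [annotate flat_map].
  inversion Hnd; subst. destruct (H a (or_introl eq_refl)) as [Ha1 Ha2]. rewrite Ha1.
  rewrite ann_R by lia. f_equal. apply IH; auto.
  intros x Hx. destruct (H x (or_intror Hx)) as [Hx1 Hx2]. split; auto.
  rewrite count_occ_app, Hx1. simpl. destruct (Nat.eq_dec a x); auto. subst; contradiction.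
Qed.

Lemma annotate_rep n j b a : 2 <= a -> forall k pre,
  annotate n j b pre (repeat a k) = flat_map (annR a j b) (seq (cnt pre a) k).
Proof.
  intros Ha k. induction k as [|k IH]; intros pre; [reflexivity|]. cbn [repeat seq annotate flat_map].
  rewrite IH. rewrite count_occ_app. simpl. destruct (Nat.eq_dec a a); [|congruence].
  rewrite Nat.add_1_r, ann_R by lia. reflexivity.
Qed.

Lemma annotate_blocks n j b l : NoDup l -> forall pre, (forall x, In x l -> cnt pre x = 1 /\ 2 <= x) ->
  annotate n j b pre (flat_map (fun r => repeat r 7) l) = flat_map (fun r => flat_map (annR r j b) (seq 1 7)) l.
Proof.
  induction l as [|a l IH]; intros Hnd pre H; [reflexivity|].
  inversion Hnd; subst. cbn [flat_map]. rewrite annotate_app.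
  destruct (H a (or_introl eq_refl)) as [Ha1 Ha2].
  rewrite annotate_rep by auto. rewrite Ha1. f_equal. apply IH; auto.
  intros x Hx. destruct (H x (or_intror Hx)) as [Hx1 Hx2]. split; auto.
  rewrite count_occ_app, Hx1.
  assert (cnt (repeat a 7) x = 0). { apply count_occ_not_In. intros Hin. apply repeat_spec in Hin. subst. contradiction. }
  lia.
Qed.

Definition R n := readers n.

Lemma AR_closed n j b : AR n j b =
  ann0 n j b 0 ++ ann1 j 0 ++ flat_map (fun r => annR r j b 0) (readers n) ++
  ann0 n j b 1 ++ ann1 j 1 ++ ann0 n j b 3 ++
  flat_map (fun r => flat_map (annR r j b) (seq 1 7)) (readers n) ++
  ann0 n j b 4 ++ ann0 n j b 5 ++ ann0 n j b 6 ++ ann1 j 2 ++ ann1 j 3.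
Proof.
  unfold AR, rs, P2, blocks, tl5.
  rewrite !annotate_app.
  rewrite (annotate_fresh n j b (readers n)).
  2: apply seq_NoDup.
  2: { intros x Hx. apply readers_spec in Hx. split; [|lia]. destruct x as [|[|x']]; [lia|lia|reflexivity]. }
  rewrite (annotate_blocks n j b (readers n)).
  2: apply seq_NoDup.
  2: { intros x Hx. apply readers_spec in Hx. split; [|lia]. rewrite !count_occ_app, cnt_readers.
       replace ((2 <=? x) && (x <? n)) with true by (symmetry; apply andb_true_iff; split; [apply Nat.leb_le|apply Nat.ltb_lt]; lia).
       destruct x as [|[|x']]; [lia|lia|reflexivity]. }
  cbn [annotate]. rewrite !count_occ_app, cnt_readers, !cnt_blocks_gen, !cnt_readers.
  simpl. rewrite ?app_nil_r. repeat rewrite <- app_assoc. reflexivity.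
Qed.


Lemma projK_app K a b : projK K (a ++ b) = projK K a ++ projK K b.
Proof. unfold projK. apply filter_app. Qed.

Lemma ann0_1 n j b : ann0 n j b 1 = lin1 n j b ++ [AEv (Resp 0 (KR1,j) RAck)].
Proof. reflexivity. Qed.

Lemma lin1_eq n j b : lin1 n j b =
  (if b then [ALin 1 (KR1,j) (OWrite (VInt (Z.of_nat 1))) RAck] else [ALin 0 (KR1,j) (OWrite (VInt (Z.of_nat 0))) RAck]) ++
  flat_map (fun r => [ALin r (KR1,j) ORead (RVal (VInt (cz b)))]) (readers n) ++
  (if b then [ALin 0 (KR1,j) (OWrite (VInt (Z.of_nat 0))) RAck] else [ALin 1 (KR1,j) (OWrite (VInt (Z.of_nat 1))) RAck]).
Proof. unfold lin1. rewrite map_as_flat. destruct b; reflexivity. Qed.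

Lemma proc_gen (f : nat -> list item) : (forall r it, In it (f r) -> item_proc it = r) ->
  forall K r it, In r (readers 0 ++ []) \/ True -> In it (projK K (f r)) -> item_proc it = r.
Proof. intros H K r it _ Hit. unfold projK in Hit. apply filter_In in Hit as [Hit _]. eauto. Qed.

Lemma procA r j b s it : In it (annR r j b s) -> item_proc it = r.
Proof. apply annR_proc. Qed.
Lemma procB r j b it : In it (flat_map (annR r j b) (seq 1 7)) -> item_proc it = r.
Proof. intros H. apply in_flat_map in H as [s [_ H]]. eapply annR_proc; eauto. Qed.
Lemma procC r j b it : In it [ALin r (KR1,j) ORead (RVal (VInt (cz b)))] -> item_proc it = r.
Proof. intros [<-|[]]. reflexivity. Qed.

Ltac flat_tac :=
  rewrite stat_from_flat; [ | apply seq_NoDup |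
    let r := fresh "r" in let it := fresh "it" in let Hr := fresh in let Hit := fresh in
    intros r it Hr Hit; unfold projK in Hit; apply filter_In in Hit as [Hit _];
    first [eapply procA; exact Hit | eapply procB; exact Hit | eapply procC; exact Hit] ].

Lemma wf_AR n j b K : wf (projK K (AR n j b)).
Proof.
  intros p. rewrite AR_closed, ann0_1, lin1_eq.
  rewrite !projK_app, !projK_flat_map, !stat_from_app.
  repeat flat_tac.
  destruct p as [|[|p']].
  - destruct (in_dec Nat.eq_dec 0 (readers n)) as [H|H]; [apply readers_spec in H; lia|].
    destruct K, b; unfold strans; simpl; discriminate.
  - destruct (in_dec Nat.eq_dec 1 (readers n)) as [H|H]; [apply readers_spec in H; lia|].
    destruct K, b; unfold strans; simpl; discriminate.
  - assert (q0 : (0 =? S (S p')) = false) by reflexivity.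
    assert (q1 : (1 =? S (S p')) = false) by reflexivity.
    assert (qq : (S (S p') =? S (S p')) = true) by apply Nat.eqb_refl.
    generalize dependent (S (S p')). intros q q0 q1 qq.
    destruct (in_dec Nat.eq_dec q (readers n)) as [H|H];
    destruct K, b; simpl; unfold strans; cbn [item_proc ev_proc]; rewrite ?q0, ?q1, ?qq; simpl; try discriminate.
Qed.

Lemma flat_nil (l : list nat) : flat_map (fun _ => @nil (op * resp)) l = [].
Proof. induction l; simpl; auto. Qed.

Lemma legal_reads v l rest : seq_legal v rest ->
  seq_legal v (flat_map (fun _ : nat => [(ORead, RVal v)]) l ++ rest).
Proof. induction l; simpl; auto. Qed.

Lemma legal_reads0 v l : seq_legal v (flat_map (fun _ : nat => [(ORead, RVal v)]) l).
Proof. induction l; simpl; auto. Qed.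

Lemma legal_writes v w l rest : l <> [] -> seq_legal w rest ->
  seq_legal v (flat_map (fun _ : nat => [(OWrite w, RAck)]) l ++ rest).
Proof.
  intros Hl Hr. destruct l as [|a l]; [congruence|]. simpl. split; auto.
  clear a Hl. induction l; simpl; auto.
Qed.

Lemma legal_AR n j b K : 3 <= n -> seq_legal (init_val (K,j)) (markers (projK K (AR n j b))).
Proof.
  intros Hn. rewrite AR_closed, ann0_1, lin1_eq, !projK_app, !projK_flat_map, !markers_app, !markers_flat.
  assert (Hne : readers n <> []) by (unfold readers; destruct n as [|[|[|n']]]; simpl; try lia; discriminate).
  destruct K, b; simpl; rewrite ?flat_nil; rewrite ?app_nil_r; repeat rewrite <- app_assoc; simpl.
  all: repeat first [exact I | split; [reflexivity|] | apply legal_reads0 | apply legal_reads | apply legal_writes; [exact Hne|] | progress simpl].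
Qed.


Definition projA r (a : list item) :=
  filter (fun it => if reg_eq_dec (item_reg it) r then true else false) a.

Lemma proj_erase r a : proj r (erase a) = erase (projA r a).
Proof.
  induction a as [|it a IH]; simpl; auto.
  destruct it as [e|p r' o x]; simpl.
  - unfold proj in *. simpl. destruct (reg_eq_dec (ev_reg e) r); simpl; rewrite IH; auto.
  - destruct (reg_eq_dec r' r); simpl; auto.
Qed.

Lemma ann_round n p j b s it : In it (ann n p j b s) -> snd (item_reg it) = j.
Proof.
  intros H. destruct p as [|[|p']].
  - destruct s as [|[|[|[|[|[|[|s]]]]]]]; simpl in H; try (intuition subst; reflexivity).
    rewrite lin1_eq in H. destruct b; simpl in H; rewrite ?in_app_iff, ?in_flat_map in H; simpl in H;
    repeat match goal with H : _ \/ _ |- _ => destruct H | H : exists _, _ |- _ => destruct H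
      | H : _ /\ _ |- _ => destruct H | H : False |- _ => destruct H end; subst; reflexivity.
  - destruct s as [|[|[|[|s]]]]; simpl in H; intuition subst; reflexivity.
  - destruct s as [|[|[|[|[|[|[|[|s]]]]]]]]; simpl in H; intuition subst; reflexivity.
Qed.

Lemma annotate_round n j b l : forall pre it, In it (annotate n j b pre l) -> snd (item_reg it) = j.
Proof.
  induction l as [|p l IH]; intros pre it H; simpl in H; [contradiction|].
  apply in_app_or in H as [H|H]; eauto using ann_round.
Qed.

Lemma projA_other r a j : (forall it, In it a -> snd (item_reg it) = j) -> snd r <> j -> projA r a = [].
Proof.
  induction a as [|it a IH]; intros H Hr; simpl; auto.
  destruct (reg_eq_dec (item_reg it) r) as [E|E].
  - exfalso. apply Hr. rewrite <- E. apply H. simpl; auto.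
  - apply IH; auto. intros; apply H; simpl; auto.
Qed.

Lemma projA_kind K a j : (forall it, In it a -> snd (item_reg it) = j) -> projA (K, j) a = projK K a.
Proof.
  induction a as [|it a IH]; intros H; simpl; auto.
  unfold projK in *. simpl. rewrite IH by (intros; apply H; simpl; auto).
  assert (Hj : snd (item_reg it) = j) by (apply H; simpl; auto).
  destruct (reg_eq_dec (item_reg it) (K, j)) as [E|E]; destruct (regkind_eq_dec (fst (item_reg it)) K) as [E'|E']; auto.
  - exfalso. apply E'. rewrite E. reflexivity.
  - exfalso. apply E. destruct (item_reg it); simpl in *; subst; reflexivity.
Qed.

Lemma projA_app r a b : projA r (a ++ b) = projA r a ++ projA r b.
Proof. unfold projA. apply filter_app. Qed.

Lemma projA_Hann n coins r j : projA r (Hann n coins j) =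
  if snd r <? j then projA r (AR n (snd r) (coins (snd r))) else [].
Proof.
  induction j as [|j IH]; simpl; auto.
  rewrite projA_app, IH.
  destruct (Nat.ltb_spec (snd r) j); destruct (Nat.ltb_spec (snd r) (S j)); try lia.
  - rewrite (projA_other r (AR n j (coins j)) j); [apply app_nil_r| |lia].
    intros; eapply annotate_round; eauto.
  - assert (snd r = j) as -> by lia. reflexivity.
  - rewrite (projA_other r (AR n j (coins j)) j); auto; [|lia]. intros; eapply annotate_round; eauto.
Qed.

Lemma prefix_ok n coins j k K j0 : exists rest,
  projA (K, j0) (AR n j0 (coins j0)) =
  projA (K, j0) (Hann n coins j ++ annotate n j (coins j) [] (firstn k (rs n))) ++ rest.
Proof.
  rewrite projA_app, projA_Hann. cbn [snd].
  assert (Hr : forall l pre, j0 <> j -> projA (K, j0) (annotate n j (coins j) pre l) = []).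
  { intros l pre Hne. apply projA_other with j; simpl; auto. intros; eapply annotate_round; eauto. }
  destruct (Nat.ltb_spec j0 j).
  - exists []. rewrite Hr by lia. rewrite !app_nil_r. destruct (Nat.ltb_spec j0 j); [reflexivity|lia].
  - destruct (Nat.eq_dec j0 j) as [->|Hne].
    + exists (projA (K, j) (annotate n j (coins j) (firstn k (rs n)) (skipn k (rs n)))).
      assert (E : AR n j (coins j) = annotate n j (coins j) [] (firstn k (rs n)) ++
                annotate n j (coins j) (firstn k (rs n)) (skipn k (rs n)))
        by (unfold AR; rewrite <- annotate_app, firstn_skipn; reflexivity).
      rewrite E, projA_app. destruct (Nat.ltb_spec j j); [lia|]. reflexivity.
    + exists (projA (K, j0) (AR n j0 (coins j0))). rewrite Hr by auto.
      destruct (Nat.ltb_spec j0 j); [lia|]. reflexivity.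
Qed.

Lemma lstate_not_done i j b s : lstate i j b s <> Ready PDone.
Proof.
  destruct i as [|[|i]]; [destruct s as [|[|[|[|[|[|[|s]]]]]]]|destruct s as [|[|[|[|s]]]]|destruct s as [|[|[|[|[|[|[|[|s]]]]]]]]];
  simpl; discriminate.
Qed.

Lemma decomp n t : t = (t / LL n) * LL n + t mod LL n /\ t mod LL n < LL n.
Proof.
  pose proof (LL_pos n). split.
  - rewrite Nat.mul_comm. apply Nat.div_mod_eq.
  - apply Nat.mod_upper_bound. lia.
Qed.

Theorem theorem1 (n : nat) (Hn : 3 <= n) :
  exists adv : adversary,
    forall coins : nat -> bool,
      (forall t, fst (adv (trace adv coins t)) < n) /\
      (forall t, regs_linearizable (hist (cfg_at adv coins t))) /\
      (forall i, i < n -> forall J, exists t j,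
          round_of (pst (cfg_at adv coins t) i) = Some j /\ J <= j) /\
      (forall i t, i < n -> pst (cfg_at adv coins t) i <> Ready PDone).
Proof.
  exists (adv n). intros coins. split; [|split; [|split]].
  - intros t. rewrite adv_trace. simpl. unfold sched. apply rs_bound; auto.
  - intros t. destruct (decomp n t) as [Ht Hk]. rewrite Ht.
    destruct (Exp_all n coins Hn (t / LL n) (t mod LL n) ltac:(lia)) as (_ & Hh & _).
    rewrite Hh. intros [K j0]. rewrite proj_erase.
    destruct (prefix_ok n coins (t / LL n) (t mod LL n) K j0) as [rest Hrest].
    assert (Hfull : forall it, In it (AR n j0 (coins j0)) -> snd (item_reg it) = j0)
      by (intros; eapply annotate_round; eauto).
    rewrite (projA_kind K _ j0 Hfull) in Hrest.
    apply lin_of_wf.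
    + apply wf_prefix with rest. rewrite <- Hrest. apply wf_AR.
    + apply legal_prefix with (markers rest). rewrite <- markers_app, <- Hrest. apply legal_AR; auto.
  - intros i Hi J. exists (J * LL n), J.
    destruct (Exp_all n coins Hn J 0 ltac:(lia)) as (Hp & _ & _).
    rewrite Nat.add_0_r in Hp. rewrite Hp by auto. simpl.
    destruct i as [|[|i]]; simpl; split; auto.
  - intros i t Hi. destruct (decomp n t) as [Ht Hk]. rewrite Ht.
    destruct (Exp_all n coins Hn (t / LL n) (t mod LL n) ltac:(lia)) as (Hp & _ & _).
    rewrite Hp by auto. apply lstate_not_done.
Qed.
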